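(* Let $n$ be a positive integer and $\lambda$ an infinite cardinal. For every $d$-feebly compact shift-continuous $T_1$-topology $\tau$ on the semilattice $\exp_n\lambda$, the subset $\exp_n\lambda\setminus\exp_{n-1}\lambda$ is dense in $(\exp_n\lambda,\tau)$.
   Context: For a positive integer $n$ and a cardinal $\lambda$, $\exp_n\lambda=\{A\subseteq\lambda\colon |A|\leqslant n\}$, regarded as a semilattice under the operation $\cap$ (so $\exp_0\lambda=\{\varnothing\}$). A topology $\tau$ on a semilattice $S$ is shift-continuous if the semilattice operation $S\times S\to S$ is separately continuous, i.e. $(S,\tau)$ is a semitopological semilattice. A topological space is $d$-feebly compact if every discrete family of open subsets of it is finite. *)

(* Defs.v *)
From HB Require Import structures.
From mathcomp Require Import all_boot.
From mathcomp Require Import finmap.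
From mathcomp Require Import boolp classical_sets cardinality.
Set Implicit Arguments. Unset Strict Implicit. Unset Printing Implicit Defensive.

Local Open Scope fset_scope.

Definition exp_set (L : choiceType) (n : nat) := {A : {fset L} | (#|` A| <= n)%N}.

Lemma exp_meet_proof (L : choiceType) (n : nat) (A B : exp_set L n) :
  (#|` (val A `&` val B)| <= n)%N.
Proof.
apply: leq_trans (fsubset_leq_card (fsubsetIl _ _)) _; exact: (proj2_sig A).
Qed.

Definition exp_meet (L : choiceType) (n : nat) (A B : exp_set L n) : exp_set L n :=
  exist _ (val A `&` val B) (exp_meet_proof A B).

Definition is_topology (X : Type) (O : set (set X)) : Prop :=
  O setT /\ O set0 /\
  (forall F : set (set X), (forall U, F U -> O U) -> O (fun x => exists2 U, F U & U x)) /\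
  (forall U V, O U -> O V -> O (fun x => U x /\ V x)).

Definition T1_top (X : Type) (O : set (set X)) : Prop :=
  forall x y : X, x <> y -> exists U, O U /\ U x /\ ~ U y.

Definition continuous_top (X : Type) (O : set (set X)) (f : X -> X) : Prop :=
  forall U, O U -> O (fun x => U (f x)).

Definition shift_continuous (X : Type) (m : X -> X -> X) (O : set (set X)) : Prop :=
  forall a : X, continuous_top O (m a) /\ continuous_top O (fun x => m x a).

Definition discrete_family (X : Type) (O : set (set X)) (F : set (set X)) : Prop :=
  forall x : X, exists W, O W /\ W x /\
    forall U V, F U -> F V -> (exists y, W y /\ U y) -> (exists y, W y /\ V y) -> U = V.

Definition d_feebly_compact (X : Type) (O : set (set X)) : Prop :=
  forall F : set (set X), (forall U, F U -> O U) -> discrete_family O F -> finite_set F.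

Definition dense_in (X : Type) (O : set (set X)) (D : set X) : Prop :=
  forall U, O U -> (exists x, U x) -> exists x, U x /\ D x.

(* Main.v *)
Require Import Defs.
From HB Require Import structures.
From mathcomp Require Import all_boot.
From mathcomp Require Import finmap.
From mathcomp Require Import boolp classical_sets cardinality.
Set Implicit Arguments. Unset Strict Implicit. Unset Printing Implicit Defensive.

Section Helpers.
Local Open Scope fset_scope.

Lemma open_compl_pt (X : Type) (O : set (set X)) :
  is_topology O -> T1_top O -> forall a, O (fun z => z <> a).
Proof.
move=> [OT [O0 [Ou Oi]]] T1 a.
have -> : (fun z => z <> a) =
   (fun x => exists2 U, (fun V => O V /\ ~ V a) U & U x).
  apply: funext => z; apply: propext; split.
  - by move=> za; have [U [OU [Uz Ua]]] := T1 z a za; exists U.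
  - by move=> [U [_ Ua] Uz] e; apply: Ua; rewrite -e.
by apply: Ou => U [].
Qed.

Lemma open_inter_seq (X : Type) (O : set (set X)) (T : eqType) :
  is_topology O -> forall (P : T -> set X), (forall m, O (P m)) ->
  forall s : seq T, O (fun z => forall m, m \in s -> P m z).
Proof.
move=> [OT [O0 [Ou Oi]]] P OP; elim => [|a s IH].
  have -> : (fun z => forall m, m \in [::] -> P m z) = (fun _ => True).
    apply: funext => z; apply: propext; split => // _ m; by rewrite in_nil.
  exact: OT.
have -> : (fun z => forall m, m \in a :: s -> P m z) =
   (fun z => P a z /\ (fun z => forall m, m \in s -> P m z) z).
  apply: funext => z; apply: propext; split.
    move=> H; split; first by apply: H; rewrite mem_head.
    by move=> m ms; apply: H; rewrite in_cons ms orbT.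
  by move=> [Ha Hs] m; rewrite in_cons => /orP [/eqP -> | /Hs].
by apply: Oi.
Qed.

Variable L : choiceType.
Hypothesis Hinf : ~ finite_set (@setT L).

Lemma fresh_ex (A : {fset L}) : exists l, l \notin A.
Proof.
case: (pselect (exists l, l \notin A)) => // H; exfalso; apply: Hinf.
apply: (finite_subfset A) => l _ /=.
by case: (boolP (l \in A)) => // la; exfalso; apply: H; exists l; rewrite la.
Qed.

Definition fresh (A : {fset L}) : L := xchoose (fresh_ex A).
Lemma fresh_notin A : fresh A \notin A.
Proof. exact: (xchooseP (fresh_ex A)). Qed.

Definition ext (Av A : {fset L}) (m : nat) : {fset L} :=
  iter m (fun B => fresh (Av `|` B) |` B) A.

Lemma card_ext Av A m : #|` ext Av A m| = (#|` A| + m)%N.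
Proof.
elim: m => [|m IH] /=; first by rewrite addn0.
rewrite cardfsU1 IH.
have : fresh (Av `|` ext Av A m) \notin ext Av A m.
  by move: (fresh_notin (Av `|` ext Av A m)); rewrite inE negb_or => /andP[].
by move=> ->; rewrite addnS add1n.
Qed.

Lemma sub_ext Av A m : A `<=` ext Av A m.
Proof.
elim: m => [|m IH] /=; first exact: fsubset_refl.
apply: (fsubset_trans IH); exact: fsubsetU1.
Qed.

Lemma ext_new Av A m l : l \in ext Av A m -> l \in A \/ l \notin Av.
Proof.
elim: m => [|m IH] /=; first by left.
rewrite !inE => /orP [/eqP -> | /IH //]; right.
by move: (fresh_notin (Av `|` ext Av A m)); rewrite inE negb_or => /andP[].
Qed.

Variables (x : {fset L}) (d : nat).

Fixpoint used (i : nat) : {fset L} :=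
  if i is i'.+1 then used i' `|` ext (used i') x d else x.

Definition yy i := ext (used i) x d.

Lemma used_mono i j : (i <= j)%N -> used i `<=` used j.
Proof.
elim: j => [|j IH]; first by rewrite leqn0 => /eqP ->; exact: fsubset_refl.
rewrite leq_eqVlt => /orP [/eqP -> | ]; first exact: fsubset_refl.
rewrite ltnS => /IH H /=; apply: (fsubset_trans H); exact: fsubsetUl.
Qed.

Lemma yy_pair i j m : m \in yy i -> m \in yy j -> m \notin x -> i = j.
Proof.
wlog: i j / (i <= j)%N.
  move=> W a b c; case: (leqP i j) => h; first exact: W h a b c.
  by symmetry; apply: W (ltnW h) b a c.
move=> ij mi mj mx; apply/eqP; rewrite eqn_leq ij /=; apply/negP => /negP.
rewrite -ltnNge => lt.
have : m \in used j.
  have H : yy i `<=` used i.+1 by rewrite /= /yy; exact: fsubsetUr.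
  move: lt => /used_mono /fsubsetP; apply; exact: (fsubsetP H).
case: (ext_new mj) => h; first by rewrite h in mx.
by rewrite (negbTE h).
Qed.

Lemma card_yy i : #|` yy i| = (#|` x| + d)%N.
Proof. exact: card_ext. Qed.

Lemma x_sub_yy i : x `<=` yy i.
Proof. exact: sub_ext. Qed.

End Helpers.

Lemma open_mem (L : choiceType) (n : nat) (O : set (set (exp_set L n))) :
  (0 < n)%N -> is_topology O -> T1_top O -> shift_continuous (@exp_meet L n) O ->
  forall m : L, O (fun z : exp_set L n => m \in val z).
Proof.
move=> n0 Ht T1 Hsc m.
have p1 : (#|` [fset m]%fset| <= n)%N by rewrite cardfs1.
have p0 : (#|` (fset0 : {fset L})| <= n)%N by rewrite cardfs0.
pose em : exp_set L n := exist _ [fset m]%fset p1.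
pose e0 : exp_set L n := exist _ fset0 p0.
have := (Hsc em).1 _ (open_compl_pt Ht T1 e0).
have -> // : (fun z => exp_meet em z <> e0) = (fun z => m \in val z).
apply: funext => z; apply: propext; split.
- move=> H; case: (boolP (m \in val z)) => // mz; exfalso; apply: H.
  apply: val_inj => /=; rewrite fsetIC fsetI1 (negbTE mz) //.
- move=> mz e; have := congr1 val e => /=; rewrite fsetIC fsetI1 mz => /eqP.
  by rewrite -cardfs_eq0 cardfs1.
Qed.

Lemma open_up (L : choiceType) (n : nat) (O : set (set (exp_set L n))) :
  (0 < n)%N -> is_topology O -> T1_top O -> shift_continuous (@exp_meet L n) O ->
  forall y : exp_set L n, O (fun z : exp_set L n => (val y `<=` val z)%fset).
Proof.
move=> n0 Ht T1 Hsc y.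
have := open_inter_seq Ht (open_mem n0 Ht T1 Hsc) (val y).
have -> // : (fun z : exp_set L n => forall m, m \in (val y : seq L) -> m \in val z)
   = (fun z => (val y `<=` val z)%fset).
apply: funext => z; apply: propext; split.
- by move=> H; apply/fsubsetP => m my; apply: H.
- by move=> /fsubsetP H m my; apply: H.
Qed.

Theorem proposition2 (L : choiceType) (n : nat) (O : set (set (exp_set L n))) :
  (0 < n)%N ->
  ~ finite_set (setT : set L) ->
  is_topology O -> T1_top O -> shift_continuous (@exp_meet L n) O ->
  d_feebly_compact O ->
  dense_in O (fun A : exp_set L n => #|` val A|%fset = n).
Proof.
move=> n0 Hinf Ht T1 Hsc Hdfc U OU [x Ux].
case: (pselect (exists x0, U x0 /\ #|` val x0|%fset = n)) => // Hno; exfalso.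
have noN : forall w, U w -> #|` val w|%fset <> n.
  by move=> w Uw e; apply: Hno; exists w.
have xle : (#|` val x|%fset <= n)%N := proj2_sig x.
have xlt : (#|` val x|%fset < n)%N.
  by rewrite ltn_neqAle xle andbT; apply/eqP; apply: noN.
pose d := (n - #|` val x|%fset)%N.
have cy : forall i, #|` yy Hinf (val x) d i|%fset = n.
  by move=> i; rewrite card_yy /d subnKC // ltnW.
have py : forall i, (#|` yy Hinf (val x) d i|%fset <= n)%N by move=> i; rewrite cy.
pose y i : exp_set L n := exist _ (yy Hinf (val x) d i) (py i).
pose up (v : exp_set L n) : set (exp_set L n) :=
  (fun z : exp_set L n => is_true (val v `<=` val z)%fset).
have upeq : forall i w, up (y i) w -> val w = yy Hinf (val x) d i.
  move=> i w H; apply/esym/eqP; rewrite eqEfcard; apply/andP; split; first exact: H.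
  rewrite cy; exact: (proj2_sig w).
pose F : set (set (exp_set L n)) := (fun W => exists i, W = up (y i)).
have finF : finite_set F.
  apply: Hdfc; first by move=> W [i ->]; exact: open_up.
    move=> z.
  case: (boolP (val z `<=` val x)%fset) => zx.
    case: (eqVneq z x) => [->|zneq].
      exists U; split => //; split => //.
      move=> V1 V2 [i ->] _ [w [Uw upw]] _; exfalso.
      by apply: (noN w Uw); rewrite (upeq i w upw) cy.
    have [V [OV [Vz Vx]]] := T1 z x (elimN eqP zneq).
    exists (fun w => V (exp_meet w x)); split; first exact: (Hsc x).2.
    split.
      have -> : exp_meet z x = z by apply: val_inj => /=; apply/fsetIidPl.
      exact: Vz.
    move=> V1 V2 [i ->] _ [w [Vw upw]] _; exfalso; apply: Vx.
    have <- : exp_meet w x = x; last exact: Vw.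
    apply: val_inj => /=; apply/fsetIidPr.
    rewrite (upeq i w upw); exact: x_sub_yy.
  have [m mz mx] := fsubsetPn _ _ zx.
  exists (fun w : exp_set L n => m \in val w); split; first exact: open_mem.
  split => //.
  move=> V1 V2 [i ->] [j ->] [w1 [m1 u1]] [w2 [m2 u2]].
  rewrite (upeq i w1 u1) in m1; rewrite (upeq j w2 u2) in m2.
  by rewrite (yy_pair m1 m2 mx).
apply: infinite_nat.
have : finite_set (preimage (fun i => up (y i)) F).
  apply: finite_preimage => //.
  move=> i j _ _ e.
  have [m mi mx] : exists2 m, m \in yy Hinf (val x) d i & m \notin val x.
    apply/fsubsetPn; apply/negP => H.
    by have := fsubset_leq_card H; rewrite cy leqNgt xlt.
  have : up (y i) (y j) by rewrite e /=; exact: fsubset_refl.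
  move=> /= /fsubsetP H.
  apply: (yy_pair mi _ mx).
  by apply: H.
have -> : preimage (fun i => up (y i)) F = (setT : set nat).
  by apply: funext => i; apply: propext; split => // _; exists i.
done.
Qed.
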